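(* Let $n\ge2$, let $D$ and $D'$ be proper subdomains of $\mathbb{R}^n$, and let $f:\overline{\mathbb{R}}^n\to\overline{\mathbb{R}}^n$ be a Möbius transformation with $f(D)=D'$. Then for all $x,y\in D$, $$\tfrac12\tilde\tau_D(x,y)\le\tilde\tau_{D'}(f(x),f(y))\le2\tilde\tau_D(x,y).$$
   Context: $\overline{\mathbb{R}}^n=\mathbb{R}^n\cup\{\infty\}$; a Möbius transformation is a finite composition of reflections in spheres and hyperplanes. For a proper subdomain $D\subsetneq\mathbb{R}^n$ and $x,y\in D$, $\tilde\tau_D(x,y)=\log\big(1+\sup_{p\in\partial D}\frac{|x-y|}{\sqrt{|x-p||y-p|}}\big)$ (the scale invariant Cassinian metric), where $\partial D$ is the boundary of $D$ in $\mathbb{R}^n$. *)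

(* Defs.v *)
From Stdlib Require Import Reals ClassicalEpsilon.
From mathcomp Require Import ssreflect ssrfun ssrbool eqtype ssrnat fintype bigop.
Set Implicit Arguments.
Unset Strict Implicit.
Unset Printing Implicit Defensive.
Local Open Scope R_scope.

Definition pt (n : nat) := 'I_n -> R.
(* Points of the one-point compactification: None = infinity *)
Definition ext (n : nat) := option (pt n).

Definition vadd n (x y : pt n) : pt n := fun i => x i + y i.
Definition vsub n (x y : pt n) : pt n := fun i => x i - y i.
Definition vscale n (c : R) (x : pt n) : pt n := fun i => c * x i.
Definition dot n (x y : pt n) : R := \big[Rplus/0]_(i < n) (x i * y i).
Definition norm n (x : pt n) : R := sqrt (dot x x).
Definition dist n (x y : pt n) : R := norm (vsub x y).

Definition sphere_refl n (a : pt n) (r : R) (z : ext n) : ext n :=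
  match z with
  | None => Some a
  | Some x =>
      match excluded_middle_informative (x = a) with
      | left _ => None
      | right _ => Some (vadd a (vscale (r ^ 2 / (dist x a) ^ 2) (vsub x a)))
      end
  end.

Definition plane_refl n (u : pt n) (t : R) (z : ext n) : ext n :=
  match z with
  | None => None
  | Some x => Some (vsub x (vscale (2 * (dot x u - t) / (norm u) ^ 2) u))
  end.

Inductive is_reflection n : (ext n -> ext n) -> Prop :=
  | refl_sphere (a : pt n) (r : R) : 0 < r -> is_reflection (sphere_refl a r)
  | refl_plane (u : pt n) (t : R) : u <> (fun _ => 0) -> is_reflection (plane_refl u t).

Inductive is_mobius n : (ext n -> ext n) -> Prop :=
  | mob_id : is_mobius (fun z => z)
  | mob_comp (f g : ext n -> ext n) :
      is_mobius f -> is_reflection g -> is_mobius (fun z => g (f z)).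

Definition ball n (c : pt n) (e : R) (x : pt n) : Prop := dist x c < e.
Definition is_open n (U : pt n -> Prop) : Prop :=
  forall x, U x -> exists e, 0 < e /\ forall y, ball x e y -> U y.
Definition is_connected n (D : pt n -> Prop) : Prop :=
  ~ exists U V : pt n -> Prop,
      is_open U /\ is_open V /\
      (exists x, D x /\ U x) /\ (exists x, D x /\ V x) /\
      (forall x, D x -> U x \/ V x) /\ (forall x, D x -> U x -> V x -> False).
Definition is_domain n (D : pt n -> Prop) : Prop :=
  (exists x, D x) /\ is_open D /\ is_connected D.
Definition is_proper n (D : pt n -> Prop) : Prop := exists x, ~ D x.
Definition boundary n (D : pt n -> Prop) (p : pt n) : Prop :=
  (forall e, 0 < e -> exists x, ball p e x /\ D x) /\
  (forall e, 0 < e -> exists x, ball p e x /\ ~ D x).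

(* Supremum of a set of reals (0 if empty or unbounded above). *)
Definition Rsup (E : R -> Prop) : R :=
  match excluded_middle_informative (bound E /\ exists x, E x) with
  | left H => proj1_sig (completeness E (proj1 H) (proj2 H))
  | right _ => 0
  end.

Definition tau_tilde n (D : pt n -> Prop) (x y : pt n) : R :=
  ln (1 + Rsup (fun s => exists p, boundary D p /\
                   s = dist x y / sqrt (dist x p * dist y p))).

(* Main.v *)
Require Import Defs.
From Stdlib Require Import Reals Lra Psatz ClassicalEpsilon FunctionalExtensionality PropExtensionality.
From HB Require Import structures.
From mathcomp Require Import ssreflect ssrfun ssrbool eqtype ssrnat fintype bigop.
Require Import Defs.
Set Implicit Arguments.
Unset Strict Implicit.
Local Open Scope R_scope.

Lemma Rplus_assoc' : associative Rplus. Proof. move=> *; ring. Qed.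
HB.instance Definition _ := Monoid.isComLaw.Build R 0 Rplus Rplus_assoc' Rplus_comm Rplus_0_l.

Lemma sum_lin n (F G : 'I_n -> R) a b :
  \big[Rplus/0]_(i < n) (a * F i + b * G i) =
  a * \big[Rplus/0]_(i < n) F i + b * \big[Rplus/0]_(i < n) G i.
Proof.
elim/big_rec3: _ => [|i y1 y2 y3 _ ->]; first ring. ring.
Qed.

Lemma sum_ge0 n (F : 'I_n -> R) : (forall i, 0 <= F i) -> 0 <= \big[Rplus/0]_(i < n) F i.
Proof. move=> H; elim/big_ind: _ => //; [lra| move=> *; lra]. Qed.

Lemma sum_term_le n (F : 'I_n -> R) j : (forall i, 0 <= F i) -> F j <= \big[Rplus/0]_(i < n) F i.
Proof.
move=> H; rewrite (bigD1 j) //=.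
have : 0 <= \big[Rplus/0]_(i < n | i != j) F i.
  elim/big_ind: _ => //; [lra| move=> *; lra].
move=> h; rewrite -{1}(Rplus_0_r (F j)); by apply Rplus_le_compat_l.
Qed.

Section Vec.
Variable n : nat.
Implicit Types x y z u v : pt n.

Lemma dot_sym x y : dot x y = dot y x.
Proof. by apply: eq_bigr => i _; ring. Qed.

Lemma dot_lin x y z a b :
  dot (fun i => a * x i + b * y i) z = a * dot x z + b * dot y z.
Proof.
rewrite /dot -sum_lin; apply: eq_bigr => i _; ring.
Qed.

Lemma dot_subl x y z : dot (vsub x y) z = dot x z - dot y z.
Proof.
have -> : vsub x y = (fun i => 1 * x i + (-1) * y i).
  by apply: functional_extensionality => i; rewrite /vsub; ring.
rewrite dot_lin; ring.
Qed.

Lemma dot_addl x y z : dot (vadd x y) z = dot x z + dot y z.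
Proof.
have -> : vadd x y = (fun i => 1 * x i + 1 * y i).
  by apply: functional_extensionality => i; rewrite /vadd; ring.
rewrite dot_lin; ring.
Qed.

Lemma dot_scalel a x z : dot (vscale a x) z = a * dot x z.
Proof.
have -> : vscale a x = (fun i => a * x i + 0 * x i).
  by apply: functional_extensionality => i; rewrite /vscale; ring.
rewrite dot_lin; ring.
Qed.

Lemma dot_subr x y z : dot z (vsub x y) = dot z x - dot z y.
Proof. by rewrite dot_sym dot_subl (dot_sym x) (dot_sym y). Qed.
Lemma dot_addr x y z : dot z (vadd x y) = dot z x + dot z y.
Proof. by rewrite dot_sym dot_addl (dot_sym x) (dot_sym y). Qed.
Lemma dot_scaler a x z : dot z (vscale a x) = a * dot z x.
Proof. by rewrite dot_sym dot_scalel (dot_sym x). Qed.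

Lemma dot_ge0 x : 0 <= dot x x.
Proof. apply: sum_ge0 => i; nra. Qed.

Lemma dot_eq0 x : dot x x = 0 -> x = (fun _ => 0).
Proof.
move=> H; apply: functional_extensionality => i.
have := @sum_term_le _ (fun i => x i * x i) i (fun j => ltac:(nra)).
rewrite -/(dot x x) H => h; nra.
Qed.

Lemma norm_sq x : norm x ^ 2 = dot x x.
Proof. rewrite /norm /= Rmult_1_r sqrt_sqrt //; exact: dot_ge0. Qed.

Lemma norm_ge0 x : 0 <= norm x.
Proof. exact: sqrt_pos. Qed.

Lemma norm_scale a x : norm (vscale a x) = Rabs a * norm x.
Proof.
rewrite /norm dot_scalel dot_scaler -Rmult_assoc -sqrt_Rsqr_abs -sqrt_mult_alt.
  by rewrite /Rsqr.
exact: Rle_0_sqr.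
Qed.

Lemma cauchy_schwarz x y : dot x y ^ 2 <= dot x x * dot y y.
Proof.
have hx := dot_ge0 x; have hy := dot_ge0 y.
case: (Req_dec (dot y y) 0) => Hy.
  have -> : dot x y = 0.
    by rewrite (dot_eq0 Hy) /dot; elim/big_ind: _ => //= [a b -> ->|i _]; ring.
  nra.
set k := dot x y / dot y y.
have := dot_ge0 (vsub x (vscale k y)).
rewrite !dot_subl !dot_subr !dot_scalel !dot_scaler (dot_sym y x) /k => h.
have hy' : 0 < dot y y by lra.
have e : dot x x - dot x y / dot y y * dot x y -
    (dot x y / dot y y * dot x y - dot x y / dot y y * (dot x y / dot y y * dot y y))
    = (dot x x * dot y y - dot x y ^ 2) / dot y y by field.
rewrite e in h.
have : 0 <= dot x x * dot y y - dot x y ^ 2.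
  apply: (Rmult_le_reg_r (/ dot y y)); first by apply: Rinv_0_lt_compat.
  rewrite Rmult_0_l; exact: h.
lra.
Qed.

Lemma dot_le_norm x y : dot x y <= norm x * norm y.
Proof.
have h := cauchy_schwarz x y.
have := norm_ge0 x; have := norm_ge0 y.
rewrite -!norm_sq in h => h1 h2.
case: (Rle_lt_dec (dot x y) (norm x * norm y)) => // hlt.
have h3 : 0 <= norm x * norm y by apply: Rmult_le_pos.
have : (norm x * norm y) * (norm x * norm y) < dot x y * dot x y.
  apply: Rmult_le_0_lt_compat => //.
nra.
Qed.

Lemma norm_triangle x y : norm (vadd x y) <= norm x + norm y.
Proof.
have h := dot_le_norm x y.
have h1 := norm_ge0 x; have h2 := norm_ge0 y; have h3 := norm_ge0 (vadd x y).
have e : norm (vadd x y) ^ 2 = norm x ^ 2 + 2 * dot x y + norm y ^ 2.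
  rewrite !norm_sq dot_addl !dot_addr (dot_sym y x); ring.
nra.
Qed.

Lemma norm_eq0 x : norm x = 0 -> x = (fun _ => 0).
Proof. move=> h; apply: dot_eq0; rewrite -norm_sq h; ring. Qed.

End Vec.

Section Dist.
Variable n : nat.
Implicit Types x y z u v c : pt n.

Lemma dist_sq x y : dist x y ^ 2 = dot (vsub x y) (vsub x y).
Proof. exact: norm_sq. Qed.
Lemma dist_ge0 x y : 0 <= dist x y.
Proof. exact: norm_ge0. Qed.
Lemma vsub_sym x y : vsub x y = vscale (-1) (vsub y x).
Proof. apply: functional_extensionality => i; rewrite /vsub /vscale; ring. Qed.
Lemma dist_sym x y : dist x y = dist y x.
Proof. by rewrite /dist vsub_sym norm_scale Rabs_Ropp Rabs_R1 Rmult_1_l. Qed.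
Lemma dist_xx x : dist x x = 0.
Proof.
rewrite /dist /norm.
have -> : vsub x x = vscale 0 x.
  apply: functional_extensionality => i; rewrite /vsub /vscale; ring.
by rewrite dot_scalel Rmult_0_l sqrt_0.
Qed.
Lemma dist_eq0 x y : dist x y = 0 -> x = y.
Proof.
move=> /norm_eq0 h; apply: functional_extensionality => i.
have := f_equal (fun f => f i) h; rewrite /vsub /= => e; lra.
Qed.
Lemma dist_pos x y : x <> y -> 0 < dist x y.
Proof.
move=> h; case: (dist_ge0 x y) => // e.
by case: h; apply: dist_eq0.
Qed.
Lemma dist_tri x y z : dist x z <= dist x y + dist y z.
Proof.
rewrite /dist.
have -> : vsub x z = vadd (vsub x y) (vsub y z).
  apply: functional_extensionality => i; rewrite /vsub /vadd; ring.
exact: norm_triangle.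
Qed.

Definition sp c k u : pt n := vadd c (vscale k (vsub u c)).

Lemma dist_sp_c c k u : dist (sp c k u) c = Rabs k * dist u c.
Proof.
rewrite /dist -norm_scale; congr norm.
apply: functional_extensionality => i; rewrite /sp /vsub /vadd /vscale; ring.
Qed.

Lemma dist_sp_sp c k1 k2 u v :
  dist (sp c k1 u) (sp c k2 v) ^ 2 =
  k1 ^ 2 * dist u c ^ 2 - 2 * k1 * k2 * dot (vsub u c) (vsub v c) + k2 ^ 2 * dist v c ^ 2.
Proof.
rewrite !dist_sq.
have -> : vsub (sp c k1 u) (sp c k2 v) = vsub (vscale k1 (vsub u c)) (vscale k2 (vsub v c)).
  apply: functional_extensionality => i; rewrite /sp /vsub /vadd /vscale; ring.
set w1 := vsub u c; set w2 := vsub v c.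
rewrite !dot_subl !dot_subr !dot_scalel !dot_scaler (dot_sym w2); rewrite /w1 /w2 !dot_subl !dot_subr (dot_sym c u) (dot_sym c v); ring.
Qed.

Lemma dist_via c u v :
  dist u v ^ 2 = dist u c ^ 2 - 2 * dot (vsub u c) (vsub v c) + dist v c ^ 2.
Proof.
have h := dist_sp_sp c 1 1 u v.
have e : forall w, sp c 1 w = w.
  move=> w; apply: functional_extensionality => i; rewrite /sp /vsub /vadd /vscale; ring.
rewrite !e in h; rewrite h; ring.
Qed.

Lemma sqrt_sq_eq a b : 0 <= a -> 0 <= b -> a ^ 2 = b ^ 2 -> a = b.
Proof. move=> ha hb e; nra. Qed.

Lemma dist_inv c r u v : u <> c -> v <> c ->
  dist (sp c (r ^ 2 / dist u c ^ 2) u) (sp c (r ^ 2 / dist v c ^ 2) v) =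
  r ^ 2 * dist u v / (dist u c * dist v c).
Proof.
move=> hu hv.
have du := dist_pos hu; have dv := dist_pos hv.
apply: sqrt_sq_eq; first exact: dist_ge0.
  apply: Rmult_le_pos; last by apply: Rlt_le; apply: Rinv_0_lt_compat; nra.
  apply: Rmult_le_pos; [nra | exact: dist_ge0].
have e : dot (vsub u c) (vsub v c) = (dist u c ^ 2 + dist v c ^ 2 - dist u v ^ 2) / 2.
  by rewrite (dist_via c u v); field.
rewrite dist_sp_sp e.
field; lra.
Qed.

Lemma dist_inv_c c r u : u <> c ->
  dist (sp c (r ^ 2 / dist u c ^ 2) u) c = r ^ 2 / dist u c.
Proof.
move=> hu; have du := dist_pos hu.
rewrite dist_sp_c Rabs_pos_eq; first by field; lra.
apply: Rmult_le_pos; [nra| apply: Rlt_le; apply: Rinv_0_lt_compat; nra].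
Qed.

Lemma sp_inv c r u : 0 < r -> u <> c ->
  sp c (r ^ 2 / dist (sp c (r ^ 2 / dist u c ^ 2) u) c ^ 2) (sp c (r ^ 2 / dist u c ^ 2) u) = u.
Proof.
move=> hr hu; have du := dist_pos hu.
rewrite dist_inv_c //.
apply: functional_extensionality => i; rewrite /sp /vsub /vadd /vscale.
field; split; lra.
Qed.

Lemma sp_neq c r u : 0 < r -> u <> c -> sp c (r ^ 2 / dist u c ^ 2) u <> c.
Proof.
move=> hr hu e; have du := dist_pos hu.
have := dist_inv_c r hu; rewrite e dist_xx => h.
have : 0 < r ^ 2 / dist u c by apply: Rdiv_lt_0_compat; nra.
lra.
Qed.

Definition seg x q s : pt n := vadd x (vscale s (vsub q x)).

Lemma dist_seg x q s s' : dist (seg x q s) (seg x q s') = Rabs (s - s') * dist q x.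
Proof.
rewrite /dist -norm_scale; congr norm.
apply: functional_extensionality => i; rewrite /seg /vsub /vadd /vscale; ring.
Qed.

Lemma seg0 x q : seg x q 0 = x.
Proof. apply: functional_extensionality => i; rewrite /seg /vsub /vadd /vscale; ring. Qed.
Lemma seg1 x q : seg x q 1 = q.
Proof. apply: functional_extensionality => i; rewrite /seg /vsub /vadd /vscale; ring. Qed.

Lemma dist_seg_y x q y s : 0 <= s <= 1 ->
  dist y (seg x q s) <= (1 - s) * dist y x + s * dist y q.
Proof.
move=> hs; rewrite /dist.
have -> : vsub y (seg x q s) = vadd (vscale (1 - s) (vsub y x)) (vscale s (vsub y q)).
  apply: functional_extensionality => i; rewrite /seg /vsub /vadd /vscale; ring.
apply: Rle_trans (norm_triangle _ _) _.
rewrite !norm_scale !Rabs_pos_eq; lra.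
Qed.

End Dist.

Section Refl.
Variable n : nat.
Implicit Types x y z u v c : pt n.

Lemma sr_some c r x : x <> c -> sphere_refl c r (Some x) = Some (sp c (r ^ 2 / dist x c ^ 2) x).
Proof. move=> h; rewrite /sphere_refl; case: excluded_middle_informative => // _. Qed.
Lemma sr_c c r : sphere_refl c r (Some c) = None.
Proof. rewrite /sphere_refl; case: excluded_middle_informative => //. Qed.
Lemma sr_none c r : sphere_refl c r None = Some c.
Proof. by []. Qed.

Lemma sr_inv c r (z : ext n) : 0 < r -> sphere_refl c r (sphere_refl c r z) = z.
Proof.
move=> hr; case: z => [x|]; last by rewrite sr_none sr_c.
case: (excluded_middle_informative (x = c)) => [->|h]; first by rewrite sr_c.
by rewrite sr_some // sr_some ?sp_inv //; apply: sp_neq.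
Qed.

Definition pmap u t x : pt n := vsub x (vscale (2 * (dot x u - t) / norm u ^ 2) u).

Lemma pr_some u t x : plane_refl u t (Some x) = Some (pmap u t x).
Proof. by []. Qed.

Lemma nu_pos u : u <> (fun _ => 0) -> 0 < norm u ^ 2.
Proof.
move=> h; have := norm_ge0 u; case => [h1|h1]; first nra.
by case: h; apply: norm_eq0.
Qed.

Lemma pmap_inv u t x : u <> (fun _ => 0) -> pmap u t (pmap u t x) = x.
Proof.
move=> hu; have hn := nu_pos hu.
have hn0 : norm u <> 0 by move=> h0; rewrite h0 in hn; lra.
have e : dot (pmap u t x) u = 2 * t - dot x u.
  rewrite /pmap dot_subl dot_scalel -norm_sq; field; auto.
rewrite {1}/pmap e /pmap.
apply: functional_extensionality => i; rewrite /vsub /vscale; field; auto.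
Qed.

Lemma pmap_dist u t x y : u <> (fun _ => 0) -> dist (pmap u t x) (pmap u t y) = dist x y.
Proof.
move=> hu; have hn := nu_pos hu.
have hn0 : norm u <> 0 by move=> h0; rewrite h0 in hn; lra.
apply: sqrt_sq_eq; try exact: dist_ge0.
rewrite !dist_sq.
set k := 2 * (dot x u - t) / norm u ^ 2 - 2 * (dot y u - t) / norm u ^ 2.
have -> : vsub (pmap u t x) (pmap u t y) = vsub (vsub x y) (vscale k u).
  apply: functional_extensionality => i; rewrite /pmap /vsub /vscale /k; ring.
set w := vsub x y.
have ew : dot w u = dot x u - dot y u by rewrite /w dot_subl.
rewrite dot_subl !dot_subr !dot_scalel !dot_scaler  (dot_sym u x) (dot_sym u y) ew -norm_sq /k.
field; auto.
Qed.

Lemma pr_inv u t (z : ext n) : u <> (fun _ => 0) -> plane_refl u t (plane_refl u t z) = z.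
Proof. move=> hu; case: z => [x|] //; by rewrite !pr_some pmap_inv. Qed.

End Refl.

Section Mob.
Variable n : nat.

Definition simT (f : ext n -> ext n) :=
  f None = None /\ exists l, 0 < l /\
  forall z w z' w', f (Some z) = Some z' -> f (Some w) = Some w' -> dist z' w' = l * dist z w.

Definition invT (f : ext n -> ext n) :=
  exists a b l, 0 < l /\ f (Some a) = None /\ f None = Some b /\
  (forall z z', f (Some z) = Some z' -> dist z' b = l / dist z a) /\
  (forall z w z' w', f (Some z) = Some z' -> f (Some w) = Some w' ->
     dist z' w' = l * dist z w / (dist z a * dist w a)).

Definition bij (f g : ext n -> ext n) := forall z, g (f z) = z /\ f (g z) = z.

Definition Inv f := exists g, bij f g /\ (simT f \/ invT f).

Lemma bij_comp f g h : bij f g -> (forall z, h (h z) = z) -> bij (fun z => h (f z)) (fun z => g (h z)).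
Proof. move=> b hh z; split; first by rewrite hh; case: (b z). by case: (b (h z)) => _ ->. Qed.

Lemma Inv_plane f u t : u <> (fun _ => 0) -> Inv f -> Inv (fun z => plane_refl u t (f z)).
Proof.
move=> hu [g [b [[h0 [l [hl H]]]|[a [bb [l [hl [ha [hb [H1 H2]]]]]]]]]].
- exists (fun z => g (plane_refl u t z)); split; first by apply: bij_comp => // z; apply: pr_inv.
  left; split; first by rewrite h0.
  exists l; split => // z w z'' w''.
  case ez: (f (Some z)) => [z'|] //; case ew: (f (Some w)) => [w'|] //.
  rewrite !pr_some => [[<-]] [<-]; rewrite pmap_dist //; exact: H.
- exists (fun z => g (plane_refl u t z)); split; first by apply: bij_comp => // z; apply: pr_inv.
  right; exists a, (pmap u t bb), l; split => //; split; first by rewrite ha.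
  split; first by rewrite hb.
  split.
    move=> z z''; case ez: (f (Some z)) => [z'|] //; rewrite pr_some => [[<-]].
    rewrite pmap_dist //; exact: H1.
  move=> z w z'' w''.
  case ez: (f (Some z)) => [z'|] //; case ew: (f (Some w)) => [w'|] //.
  rewrite !pr_some => [[<-]] [<-]; rewrite pmap_dist //; exact: H2.
Qed.

Ltac fin := field; repeat split; (lra || (rewrite dist_sym; lra)).

Lemma bij_inj f g z w : bij f g -> f z = f w -> z = w.
Proof. move=> b e; case: (b z) => <- _; case: (b w) => <- _; by rewrite e. Qed.

Lemma Inv_sphere f c r : 0 < r -> Inv f -> Inv (fun z => sphere_refl c r (f z)).
Proof.
move=> hr [g [b Hf]].
have bh : bij (fun z => sphere_refl c r (f z)) (fun z => g (sphere_refl c r z)).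
  by apply: bij_comp => // z; apply: sr_inv.
exists (fun z => g (sphere_refl c r z)); split => //.
have [z0 [ez0 ez0']] : exists z0, g (Some c) = z0 /\ f z0 = Some c.
  by exists (g (Some c)); split => //; case: (b (Some c)).
case: Hf => [[h0 [l [hl H]]]|[a [bb [l [hl [ha [hb [H1 H2]]]]]]]].
-
  case: z0 ez0 ez0' => [z0|] ez0 ez0'; last by rewrite h0 in ez0'.
  right; exists z0, c, (r ^ 2 / l); split; first by apply: Rdiv_lt_0_compat => //; nra.
  split; first by rewrite ez0' sr_c.
  split; first by rewrite h0.
  have val : forall z z'', sphere_refl c r (f (Some z)) = Some z'' ->
      exists z', f (Some z) = Some z' /\ z' <> c /\ z'' = sp c (r ^ 2 / dist z' c ^ 2) z'.
    move=> z z''; case ez: (f (Some z)) => [z'|]; last first.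
      by rewrite -h0 in ez; have := bij_inj b ez.
    case: (excluded_middle_informative (z' = c)) => [->|hz]; first by rewrite sr_c.
    rewrite sr_some // => [[<-]]; by exists z'.
  have dzc : forall z z', f (Some z) = Some z' -> dist z' c = l * dist z z0.
    move=> z z' e; exact: H e ez0'.
  split.
    move=> z z'' /val [z' [e [hz ->]]].
    rewrite dist_inv_c //; rewrite (dzc _ _ e).
    have := dist_pos hz; rewrite (dzc _ _ e) => hp.
    have : 0 < dist z z0 by nra.
    move=> hp'; fin.
  move=> z w z'' w'' /val [z' [e [hz ->]]] /val [w' [e' [hw ->]]].
  rewrite dist_inv //; rewrite (H _ _ _ _ e e') (dzc _ _ e) (dzc _ _ e').
  have := dist_pos hz; rewrite (dzc _ _ e) => hp.
  have := dist_pos hw; rewrite (dzc _ _ e') => hp'.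
  have : 0 < dist z z0 by nra.
  have : 0 < dist w z0 by nra.
  move=> *; fin.
-
  have val : forall z z'', sphere_refl c r (f (Some z)) = Some z'' ->
      (z = a /\ z'' = c) \/
      exists z', f (Some z) = Some z' /\ z' <> c /\ z'' = sp c (r ^ 2 / dist z' c ^ 2) z'.
    move=> z z''; case ez: (f (Some z)) => [z'|]; last first.
      rewrite -ha in ez; have := bij_inj b ez => [[->]]; rewrite sr_none => [[<-]].
      by left.
    case: (excluded_middle_informative (z' = c)) => [->|hz]; first by rewrite sr_c.
    rewrite sr_some // => [[<-]]; right; by exists z'.
  have nza : forall z z', f (Some z) = Some z' -> 0 < dist z a.
    move=> z z' e; apply: dist_pos => eza; by rewrite eza ha in e.
  case: (excluded_middle_informative (c = bb)) => [ecb|ncb].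
  +
    subst bb.
    left; split; first by rewrite hb sr_c.
    exists (r ^ 2 / l); split; first by apply: Rdiv_lt_0_compat => //; nra.
    move=> z w z'' w'' /val [[-> ->]|[z' [e [hz ->]]]] /val [[-> ->]|[w' [e' [hw ->]]]].
    * rewrite !dist_xx; ring.
    * rewrite dist_sym dist_inv_c // (H1 _ _ e') (dist_sym a w).
      have := nza _ _ e'; move=> *; fin.
    * rewrite dist_inv_c // (H1 _ _ e).
      have := nza _ _ e; move=> *; fin.
    * rewrite dist_inv // (H2 _ _ _ _ e e') (H1 _ _ e) (H1 _ _ e').
      have := nza _ _ e; have := nza _ _ e'; move=> *; fin.
  + case: z0 ez0 ez0' => [z0|] ez0 ez0'; last by rewrite hb in ez0'; case: ncb; case: ez0'.
    have hD0 := nza _ _ ez0'.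
    have dcb : dist c bb = l / dist z0 a := H1 _ _ ez0'.
    have dzc : forall z z', f (Some z) = Some z' ->
        dist z' c = l * dist z z0 / (dist z a * dist z0 a).
      move=> z z' e; exact: H2 e ez0'.
    have pzz0 : forall z z', f (Some z) = Some z' -> z' <> c -> 0 < dist z z0.
      move=> z z' e hz; have := dist_pos hz; rewrite (dzc _ _ e).
      have := nza _ _ e; have := dist_ge0 z z0 => h1 h2 h3.
      case: h1 => // h1; rewrite -h1 in h3; lra.
    have hcb : 0 < dist bb c by rewrite dist_sym dcb; apply: Rdiv_lt_0_compat.
    have nbc : bb <> c by move=> e; rewrite e dist_xx in hcb; lra.
    right; exists z0, (sp c (r ^ 2 / dist bb c ^ 2) bb), (r ^ 2 * dist z0 a ^ 2 / l).
    split; first by apply: Rdiv_lt_0_compat => //; apply: Rmult_lt_0_compat; apply: pow_lt.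
    split; first by rewrite ez0' sr_c.
    split; first by rewrite hb sr_some.
    split.
      move=> z z'' /val [[-> ->]|[z' [e [hz ->]]]].
      * rewrite dist_sym dist_inv_c // (dist_sym bb c) dcb (dist_sym a z0); fin.
      * have hp := pzz0 _ _ e hz; have hz0 := nza _ _ e.
        rewrite dist_inv // (H1 _ _ e) (dzc _ _ e) (dist_sym bb c) dcb.
        fin.
    move=> z w z'' w'' /val [[-> ->]|[z' [e [hz ->]]]] /val [[-> ->]|[w' [e' [hw ->]]]].
    * rewrite !dist_xx; rewrite /Rdiv !(Rmult_0_r, Rmult_0_l) //.
    * have hp := pzz0 _ _ e' hw; have hw0 := nza _ _ e'.
      rewrite dist_sym dist_inv_c // (dzc _ _ e') (dist_sym a w) (dist_sym a z0).
      fin.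
    * have hp := pzz0 _ _ e hz; have hz0 := nza _ _ e.
      rewrite dist_inv_c // (dzc _ _ e) (dist_sym z a) (dist_sym a z0).
      fin.
    * have hp := pzz0 _ _ e hz; have hz0 := nza _ _ e.
      have hp' := pzz0 _ _ e' hw; have hw0 := nza _ _ e'.
      rewrite dist_inv // (H2 _ _ _ _ e e') (dzc _ _ e) (dzc _ _ e').
      fin.
Qed.

Lemma mobius_Inv f : is_mobius f -> Inv f.
Proof.
elim => [|f0 g _ IH hg].
- exists (fun z => z); split => //; left; split => //.
  exists 1; split; [lra| move=> z w z' w' [<-] [<-]; ring].
- case: hg => [c r hr|u t hu]; [exact: Inv_sphere | exact: Inv_plane].
Qed.

Lemma Inv_sym f g : bij f g -> simT f \/ invT f -> simT g \/ invT g.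
Proof.
move=> b [[h0 [l [hl H]]]|[a [bb [l [hl [ha [hb [H1 H2]]]]]]]].
- left; split; first by case: (b None) => e _; rewrite h0 in e.
  exists (/ l); split; first exact: Rinv_0_lt_compat.
  move=> z w z' w' e e'.
  have e1 : f (Some z') = Some z by rewrite -e; case: (b (Some z)).
  have e2 : f (Some w') = Some w by rewrite -e'; case: (b (Some w)).
  rewrite (H _ _ _ _ e1 e2); field; lra.
- right; exists bb, a, l; split => //.
  split; first by rewrite -hb; case: (b None).
  split; first by rewrite -ha; case: (b (Some a)).
  have back : forall z z', g (Some z) = Some z' -> f (Some z') = Some z.
    by move=> z z' e; rewrite -e; case: (b (Some z)).
  have nza : forall z z', f (Some z) = Some z' -> 0 < dist z a.
    move=> z z' e; apply: dist_pos => eza; by rewrite eza ha in e.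
  have nzb : forall z z', f (Some z) = Some z' -> 0 < dist z' bb.
    move=> z z' e; rewrite (H1 _ _ e); apply: Rdiv_lt_0_compat => //; exact: nza e.
  split.
    move=> z z' /back e; rewrite (H1 _ _ e); have := nza _ _ e; have := nzb _ _ e.
    move=> *; field; lra.
  move=> z w z' w' /back e /back e'.
  have := nza _ _ e; have := nzb _ _ e; have := nza _ _ e'; have := nzb _ _ e' => h1 h2 h3 h4.
  rewrite (H2 _ _ _ _ e e') (H1 _ _ e) (H1 _ _ e'); field; repeat split; lra.
Qed.

End Mob.

Section Ana.
Variable n : nat.
Implicit Types x y z u v c p q : pt n.

Definition sv x y p := dist x y / sqrt (dist x p * dist y p).
Definition Eset (D : pt n -> Prop) x y := fun s => exists p, boundary D p /\ s = dist x y / sqrt (dist x p * dist y p).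

Lemma div_ge0 a b : 0 <= a -> 0 <= b -> 0 <= a / b.
Proof.
move=> ha hb; case: hb => hb; first by apply: Rmult_le_pos => //; apply: Rlt_le; apply: Rinv_0_lt_compat.
by rewrite -hb /Rdiv Rinv_0 Rmult_0_r; lra.
Qed.

Lemma sv_ge0 x y p : 0 <= sv x y p.
Proof. apply: div_ge0; [exact: dist_ge0| exact: sqrt_pos]. Qed.

Lemma Rsup_lub E : bound E -> (exists s, E s) -> is_lub E (Rsup E).
Proof.
move=> hb he; rewrite /Rsup; case: excluded_middle_informative => [H|[]]; last by split.
by case: (completeness E _ _).
Qed.

Lemma Rsup_le E K : (forall s, E s -> s <= K) -> 0 <= K -> Rsup E <= K.
Proof.
move=> H hK; rewrite /Rsup; case: excluded_middle_informative => [Hb|_] //.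
case: (completeness E _ _) => S [_ hS] /=; apply: hS => s; exact: H.
Qed.

Lemma Rsup_ge0 E : (forall s, E s -> 0 <= s) -> 0 <= Rsup E.
Proof.
move=> H; rewrite /Rsup; case: excluded_middle_informative => [[Hb [s hs]]|_]; last lra.
case: (completeness E _ _) => S [hS _] /=.
apply: Rle_trans (H _ hs) (hS _ hs).
Qed.

Lemma bd_notin (D : pt n -> Prop) p : is_open D -> boundary D p -> ~ D p.
Proof.
move=> ho [_ hb] hp; case: (ho _ hp) => e [he H].
case: (hb e he) => w [hw nw]; exact: nw (H _ hw).
Qed.

Lemma seg_boundary (D : pt n -> Prop) x q : is_open D -> D x -> ~ D q ->
  exists th, 0 < th <= 1 /\ boundary D (seg x q th).
Proof.
move=> ho hx hq.
have xq : q <> x by move=> e; apply: hq; rewrite e.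
have L := dist_pos xq.
set E := fun th => 0 <= th <= 1 /\ forall s, 0 <= s <= th -> D (seg x q s).
have hb : bound E by exists 1 => th [[]].
have hE0 : E 0.
  split; [lra|] => s hs; have -> : s = 0 by lra.
  by rewrite seg0.
have he : exists th, E th by exists 0.
case: (completeness E hb he) => T [hT1 hT2].
have T0 : 0 <= T by apply: hT1.
have T1 : T <= 1 by apply: hT2 => th [[]].
have Ha : forall s, 0 <= s < T -> D (seg x q s).
  move=> s hs; apply: NNPP => ns.
  have : T <= s; last lra.
  apply: hT2 => th [h1 h2]; apply: Rnot_lt_le => hlt.
  by apply: ns; apply: h2; lra.
have Hc : ~ D (seg x q T).
  move=> hT; case: (Req_dec T 1) => [e1|n1].
    by apply: hq; rewrite -(seg1 x q) -e1.
  case: (ho _ hT) => e [he0 He].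
  set T' := Rmin 1 (T + e / (2 * dist q x)).
  have hpos : 0 < e / (2 * dist q x) by apply: Rdiv_lt_0_compat; lra.
  have dq := dist_pos xq.
  have hT' : T < T'.
    rewrite /T' /Rmin; case: Rle_dec; lra.
  have : T' <= T; last lra.
  apply: hT1; split; first by rewrite /T' /Rmin; case: Rle_dec; lra.
  move=> s hs; case: (Rlt_le_dec s T) => hsT; first by apply: Ha; lra.
  apply: He; rewrite /ball dist_seg Rabs_pos_eq; last lra.
  have : s - T <= e / (2 * dist q x).
    move: hs; rewrite /T' /Rmin; case: Rle_dec; lra.
  move=> h; apply: Rle_lt_trans (Rmult_le_compat_r _ _ _ (dist_ge0 q x) h) _.
  have -> : e / (2 * dist q x) * dist q x = e / 2 by field; lra.
  lra.
have Tp : 0 < T.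
  case: T0 => // e0; by case: Hc; rewrite -e0 seg0.
exists T; split; first lra.
split => e he1; last by exists (seg x q T); split => //; rewrite /ball dist_xx.
set s := Rmax 0 (T - e / (2 * dist q x)).
have hpos : 0 < e / (2 * dist q x) by apply: Rdiv_lt_0_compat; lra.
have hs : 0 <= s < T by rewrite /s /Rmax; case: Rle_dec; lra.
exists (seg x q s); split; last by apply: Ha.
rewrite /ball dist_seg Rabs_minus_sym Rabs_pos_eq; last by move: hs => [h1 h2]; lra.
have h : T - s <= e / (2 * dist q x) by rewrite /s /Rmax; case: Rle_dec; lra.
apply: Rle_lt_trans (Rmult_le_compat_r _ _ _ (dist_ge0 q x) h) _.
have -> : e / (2 * dist q x) * dist q x = e / 2 by field; lra.
lra.
Qed.

End Ana.

Section Ana2.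
Variable n : nat.
Implicit Types x y z u v c p q : pt n.
Variable D : pt n -> Prop.
Hypothesis ho : is_open D.

Lemma div_sqrt_anti t P P' : 0 <= t -> 0 < P -> P <= P' -> t / sqrt P' <= t / sqrt P.
Proof.
move=> ht hP hPP; apply: Rmult_le_compat_l => //.
apply: Rinv_le_contravar; first by apply: sqrt_lt_R0.
exact: sqrt_le_1_alt.
Qed.

Lemma notin_far x q : D x -> ~ D q -> exists e, 0 < e /\ forall q', ~ D q' -> e <= dist x q'.
Proof.
move=> hx _; case: (ho hx) => e [he H]; exists e; split => // q' nq.
apply: Rnot_lt_le => h; apply: nq; apply: H; by rewrite /ball dist_sym.
Qed.

Lemma Eset_ok x y : D x -> D y -> is_proper D ->
  bound (Eset D x y) /\ (exists s, Eset D x y s).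
Proof.
move=> hx hy [q hq]; split; last first.
  case: (seg_boundary ho hx hq) => th [_ hb].
  by exists (dist x y / sqrt (dist x (seg x q th) * dist y (seg x q th))), (seg x q th).
case: (notin_far hx hq) => ex [hex Hx]; case: (notin_far hy hq) => ey [hey Hy].
exists (dist x y / sqrt (ex * ey)) => s [p [hp ->]].
have np := bd_notin ho hp.
apply: div_sqrt_anti; [exact: dist_ge0| nra|].
apply: Rmult_le_compat; try lra; [exact: Hx| exact: Hy].
Qed.

Lemma sv_bd x y p : D x -> D y -> is_proper D -> boundary D p ->
  dist x y / sqrt (dist x p * dist y p) <= Rsup (Eset D x y).
Proof.
move=> hx hy hp hb; case: (Eset_ok hx hy hp) => B Ne.
case: (Rsup_lub B Ne) => H _; apply: H; by exists p.
Qed.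

Lemma Rsup_E_ge0 x y : 0 <= Rsup (Eset D x y).
Proof. apply: Rsup_ge0 => s [p [_ ->]]; exact: sv_ge0. Qed.

Lemma lemmaB_aux x y q : D x -> D y -> is_proper D -> ~ D q -> dist x q <= dist y q ->
  dist x y / sqrt (dist x q * dist y q) <= Rsup (Eset D x y).
Proof.
move=> hx hy hp hq hle.
case: (seg_boundary ho hx hq) => th [hth hb].
set c := seg x q th.
have nc : ~ D c := bd_notin ho hb.
have xc : c <> x by move=> e; apply: nc; rewrite e.
have yc : c <> y by move=> e; apply: nc; rewrite e.
have dxc : dist x c = th * dist q x.
  by rewrite -{1}(seg0 x q) dist_seg Rabs_minus_sym Rminus_0_r Rabs_pos_eq; lra.
have dyc := dist_seg_y x q y (conj (Rlt_le _ _ (proj1 hth)) (proj2 hth)).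
rewrite -/c in dyc.
have t1 := dist_tri x q y.
rewrite (dist_sym q y) in t1.
rewrite (dist_sym q x) in dxc.
have p1 := dist_pos xc; have p2 := dist_pos yc.
rewrite (dist_sym c x) (dist_sym c y) in p1 p2.
apply: Rle_trans (sv_bd hx hy hp hb).
apply: div_sqrt_anti; rewrite -/c; [exact: dist_ge0| exact: Rmult_lt_0_compat|].
rewrite dxc.
have hy0 := dist_ge0 y x; rewrite (dist_sym y x) in dyc hy0.
set t := dist x y in t1 dyc hy0 *; set L := dist x q in dxc hle t1 *; set M := dist y q in hle t1 dyc *.
have hL : 0 <= L by apply: dist_ge0.
apply: Rle_trans (Rmult_le_compat_l _ _ _ _ dyc) _.
  apply: Rmult_le_pos; lra.
have : th * (1 - th) * t <= th * (1 - th) * (2 * M) by apply: Rmult_le_compat_l; nra.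
move=> h.
have hM : 0 <= M by lra.
have h3 : 0 <= (1 - th) * (1 - th) * M by apply: Rmult_le_pos; nra.
have h2 : th * ((1 - th) * t + th * M) <= M by lra.
have := Rmult_le_compat_l _ _ _ hL h2; lra.
Qed.

Lemma lemmaB x y q : D x -> D y -> is_proper D -> ~ D q ->
  dist x y / sqrt (dist x q * dist y q) <= Rsup (Eset D x y).
Proof.
move=> hx hy hp hq; case: (Rle_lt_dec (dist x q) (dist y q)) => h.
  exact: lemmaB_aux.
have e : Eset D x y = Eset D y x.
  apply: functional_extensionality => s; apply: propositional_extensionality.
  by split => -[p [hb ->]]; exists p; rewrite dist_sym Rmult_comm.
rewrite dist_sym Rmult_comm e; apply: lemmaB_aux => //; lra.
Qed.

End Ana2.


Lemma root_bound S r a : 0 <= S -> r ^ 2 = S ^ 2 * (1 + r) -> S ^ 2 <= r ->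
  0 <= a -> a ^ 2 <= S ^ 2 * (1 + a) -> a <= r.
Proof.
intros hS hr hr2 ha h.
destruct (Rle_lt_dec a r) as [|hlt]; auto.
exfalso.
assert (h1 : (a - r) * (a + r) > (a - r) * S ^ 2).
{ apply Rmult_lt_compat_l; nra. }
nra.
Qed.

Lemma core t A1 A2 P1 P2 d S : 0 <= t -> 0 < A1 -> 0 < A2 -> 0 < P1 -> 0 < P2 ->
  0 <= d -> 0 <= S ->
  t ^ 2 <= S ^ 2 * (A1 * A2) -> t ^ 2 <= S ^ 2 * (P1 * P2) ->
  d <= P1 + A1 -> d <= P2 + A2 -> A2 <= A1 + t -> A1 <= A2 + t ->
  P1 <= P2 + t -> P2 <= P1 + t ->
  t ^ 2 * d ^ 2 <= (2 * S + S ^ 2) ^ 2 * (A1 * A2 * (P1 * P2)).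
Proof.
intros ht h1 h2 h3 h4 hd hS HA HP d1 d2 a1 a2 p1 p2.
destruct ht as [ht|ht]; [|subst t; assert (0 <= (2 * S + S ^ 2) ^ 2 * (A1 * A2 * (P1 * P2)))
  by (apply Rmult_le_pos; [nra| repeat apply Rmult_le_pos; lra]); nra].
assert (hd2 : d ^ 2 <= (P1 + A1) * (P2 + A2)) by nra.
set (al := t / A1); set (ga := t / A2); set (de := t / P1); set (be := t / P2).
assert (e : t ^ 2 * ((P1 + A1) * (P2 + A2)) = (al + de) * (be + ga) * (A1 * A2 * (P1 * P2))).
{ unfold al, ga, de, be; field; lra. }
set (r := (S ^ 2 + sqrt (S ^ 4 + 4 * S ^ 2)) / 2).
assert (hsq : 0 <= S ^ 4 + 4 * S ^ 2) by nra.
assert (hs1 := sqrt_sqrt _ hsq).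
assert (hs2 := sqrt_pos (S ^ 4 + 4 * S ^ 2)).
assert (hs3 : S ^ 2 <= sqrt (S ^ 4 + 4 * S ^ 2)).
{ apply Rsqr_incr_0_var; unfold Rsqr; [nra| lra]. }
assert (hr : r ^ 2 = S ^ 2 * (1 + r)) by (unfold r; nra).
assert (hr2 : S ^ 2 <= r) by (unfold r; lra).
assert (hpos : forall a b, 0 < a -> 0 < b -> 0 <= a / b).
{ intros; apply Rlt_le; apply Rdiv_lt_0_compat; auto. }
assert (Hal : al <= r).
{ apply (@root_bound S r al hS hr hr2); [unfold al; auto|].
  unfold al; apply (Rmult_le_reg_r (A1 ^ 2)); [nra|].
  replace ((t / A1) ^ 2 * A1 ^ 2) with (t ^ 2) by (field; lra).
  replace (S ^ 2 * (1 + t / A1) * A1 ^ 2) with (S ^ 2 * (A1 * (A1 + t))) by (field; lra).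
  assert (S ^ 2 * (A1 * A2) <= S ^ 2 * (A1 * (A1 + t))) by (apply Rmult_le_compat_l; nra). lra. }
assert (Hga : ga <= r).
{ apply (@root_bound S r ga hS hr hr2); [unfold ga; auto|].
  unfold ga; apply (Rmult_le_reg_r (A2 ^ 2)); [nra|].
  replace ((t / A2) ^ 2 * A2 ^ 2) with (t ^ 2) by (field; lra).
  replace (S ^ 2 * (1 + t / A2) * A2 ^ 2) with (S ^ 2 * (A2 * (A2 + t))) by (field; lra).
  assert (S ^ 2 * (A1 * A2) <= S ^ 2 * (A2 * (A2 + t))) by (apply Rmult_le_compat_l; nra). lra. }
assert (Hde : de <= r).
{ apply (@root_bound S r de hS hr hr2); [unfold de; auto|].
  unfold de; apply (Rmult_le_reg_r (P1 ^ 2)); [nra|].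
  replace ((t / P1) ^ 2 * P1 ^ 2) with (t ^ 2) by (field; lra).
  replace (S ^ 2 * (1 + t / P1) * P1 ^ 2) with (S ^ 2 * (P1 * (P1 + t))) by (field; lra).
  assert (S ^ 2 * (P1 * P2) <= S ^ 2 * (P1 * (P1 + t))) by (apply Rmult_le_compat_l; nra). lra. }
assert (Hbe : be <= r).
{ apply (@root_bound S r be hS hr hr2); [unfold be; auto|].
  unfold be; apply (Rmult_le_reg_r (P2 ^ 2)); [nra|].
  replace ((t / P2) ^ 2 * P2 ^ 2) with (t ^ 2) by (field; lra).
  replace (S ^ 2 * (1 + t / P2) * P2 ^ 2) with (S ^ 2 * (P2 * (P2 + t))) by (field; lra).
  assert (S ^ 2 * (P1 * P2) <= S ^ 2 * (P2 * (P2 + t))) by (apply Rmult_le_compat_l; nra). lra. }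
assert (al0 : 0 < al) by (unfold al; apply Rdiv_lt_0_compat; auto).
assert (ga0 : 0 < ga) by (unfold ga; apply Rdiv_lt_0_compat; auto).
assert (de0 : 0 < de) by (unfold de; apply Rdiv_lt_0_compat; auto).
assert (be0 : 0 < be) by (unfold be; apply Rdiv_lt_0_compat; auto).
assert (Hag : al * ga <= S ^ 2).
{ unfold al, ga; apply (Rmult_le_reg_r (A1 * A2)); [nra|].
  replace (t / A1 * (t / A2) * (A1 * A2)) with (t ^ 2) by (field; lra). lra. }
assert (Hdb : de * be <= S ^ 2).
{ unfold de, be; apply (Rmult_le_reg_r (P1 * P2)); [nra|].
  replace (t / P1 * (t / P2) * (P1 * P2)) with (t ^ 2) by (field; lra). lra. }
set (K0 := r ^ 2).
assert (X1 : al * be <= K0) by (unfold K0; nra).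
assert (X2 : de * ga <= K0) by (unfold K0; nra).
assert (XY : (al * be) * (de * ga) <= S ^ 4).
{ replace ((al * be) * (de * ga)) with ((al * ga) * (de * be)) by ring.
  assert (0 <= al * ga) by nra. assert (0 <= de * be) by nra. nra. }
assert (Sp : 0 < S).
{ destruct hS as [|hS0]; auto. subst S. assert (0 < t ^ 2) by nra. lra. }
assert (K0p : 0 < K0) by (unfold K0; nra).
assert (KK : K0 * K0 + S ^ 4 = K0 * (2 * S ^ 2 + S ^ 4)) by (unfold K0; rewrite hr; nra).
assert (HXY : al * be + de * ga <= 2 * S ^ 2 + S ^ 4).
{ apply (Rmult_le_reg_l K0); auto. nra. }
assert (Hm : (al + de) * (be + ga) <= (2 * S + S ^ 2) ^ 2).
{ assert (0 <= S ^ 3) by (apply pow_le; lra). nra. }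
assert (hprod : 0 < A1 * A2 * (P1 * P2)) by (repeat apply Rmult_lt_0_compat; auto).
assert (t ^ 2 * d ^ 2 <= t ^ 2 * ((P1 + A1) * (P2 + A2))) by (apply Rmult_le_compat_l; nra).
rewrite e in H.
assert ((al + de) * (be + ga) * (A1 * A2 * (P1 * P2)) <= (2 * S + S ^ 2) ^ 2 * (A1 * A2 * (P1 * P2))).
{ apply Rmult_le_compat_r; lra. }
lra.
Qed.

Lemma ratio_eq u v B B' : 0 <= u -> 0 <= v -> 0 < B -> 0 < B' ->
  u ^ 2 * B' = v ^ 2 * B -> u / sqrt B = v / sqrt B'.
Proof.
move=> hu hv hB hB' e.
have s1 := sqrt_lt_R0 _ hB; have s2 := sqrt_lt_R0 _ hB'.
have q1 := sqrt_sqrt _ (Rlt_le _ _ hB); have q2 := sqrt_sqrt _ (Rlt_le _ _ hB').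
apply: sqrt_sq_eq; try (apply: div_ge0; lra).
have -> : (u / sqrt B) ^ 2 = u ^ 2 / (sqrt B * sqrt B) by field; lra.
rewrite q1.
have -> : (v / sqrt B') ^ 2 = v ^ 2 / (sqrt B' * sqrt B') by field; lra.
rewrite q2.
apply: (Rmult_eq_reg_r (B * B')); last by nra.
have -> : u ^ 2 / B * (B * B') = u ^ 2 * B' by field; lra.
have -> : v ^ 2 / B' * (B * B') = v ^ 2 * B by field; lra.
done.
Qed.

Lemma le_by_sq v N K : 0 <= v -> 0 < N -> 0 <= K -> v ^ 2 <= K ^ 2 * N -> v / sqrt N <= K.
Proof.
move=> hv hN hK h.
have s1 := sqrt_lt_R0 _ hN; have q1 := sqrt_sqrt _ (Rlt_le _ _ hN).
have : v <= K * sqrt N.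
  apply: Rnot_lt_le => hlt.
  have h0 : 0 <= K * sqrt N by apply: Rmult_le_pos; lra.
  have : (K * sqrt N) * (K * sqrt N) < v * v by apply: Rmult_le_0_lt_compat.
  have -> : K * sqrt N * (K * sqrt N) = K ^ 2 * (sqrt N * sqrt N) by ring.
  rewrite q1; lra.
move=> h1; apply: (Rmult_le_reg_r (sqrt N)) => //.
have -> : v / sqrt N * sqrt N = v by field; lra.
done.
Qed.

Lemma sq_of_le t B S : 0 <= t -> 0 < B -> t / sqrt B <= S -> t ^ 2 <= S ^ 2 * B.
Proof.
move=> ht hB h.
have s1 := sqrt_lt_R0 _ hB; have q1 := sqrt_sqrt _ (Rlt_le _ _ hB).
have h1 : t <= S * sqrt B.
  have -> : t = t / sqrt B * sqrt B by field; lra.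
  apply: Rmult_le_compat_r; lra.
have h2 : 0 <= S * sqrt B by lra.
have : t * t <= (S * sqrt B) * (S * sqrt B) by apply: Rmult_le_compat.
have -> : S * sqrt B * (S * sqrt B) = S ^ 2 * (sqrt B * sqrt B) by ring.
rewrite q1; lra.
Qed.

Section Main.
Variable n : nat.

Definition imgc (f : ext n -> ext n) (D D' : pt n -> Prop) :=
  forall z : ext n, (exists x, D x /\ f (Some x) = z) <-> (exists y, D' y /\ z = Some y).

Lemma I1 f D D' w : imgc f D D' -> D w -> exists w', f (Some w) = Some w' /\ D' w'.
Proof.
move=> H hw; case: (proj1 (H (f (Some w)))); first by exists w.
by move=> y [hy e]; exists y.
Qed.

Lemma I2 f D D' w' : imgc f D D' -> D' w' -> exists w, D w /\ f (Some w) = Some w'.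
Proof. move=> H hw; apply: (proj2 (H (Some w'))); by exists w'. Qed.

Lemma bd_pre f (D D' : pt n -> Prop) p q : imgc f D D' -> f (Some p) = Some q ->
  (forall e, 0 < e -> exists d, 0 < d /\
     (forall w w', dist w' q < d -> f (Some w) = Some w' -> dist w p < e) /\
     (forall w', dist w' q < d -> exists w, f (Some w) = Some w')) ->
  boundary D' q -> boundary D p.
Proof.
move=> H fp C [B1 B2]; split => e he; case: (C e he) => d [hd [C1 C2]].
- case: (B1 d hd) => w' [hb hw']; case: (I2 H hw') => w [hw ew].
  exists w; split => //; exact: C1 hb ew.
- case: (B2 d hd) => w' [hb hw']; case: (C2 _ hb) => w ew.
  exists w; split; first exact: C1 hb ew.
  move=> hw; case: (I1 H hw) => w'' [e1 e2]; rewrite ew in e1; case: e1 => e1.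
  by apply: hw'; rewrite e1.
Qed.

Lemma upper (D D' : pt n -> Prop) f g x y fx fy :
  is_open D -> is_proper D -> bij f g -> simT f \/ invT f -> imgc f D D' ->
  D x -> D y -> f (Some x) = Some fx -> f (Some y) = Some fy ->
  tau_tilde D' fx fy <= 2 * tau_tilde D x y.
Proof.
move=> ho hp b Hf H hx hy ex ey.
rewrite /tau_tilde -/(Eset D x y) -/(Eset D' fx fy).
set S := Rsup (Eset D x y).
have S0 : 0 <= S := Rsup_E_ge0 D x y.
have Hb := sv_bd ho hx hy hp; rewrite -/S in Hb.
have HB := lemmaB ho hx hy hp; rewrite -/S in HB.
have npx : forall p, boundary D p -> 0 < dist x p /\ 0 < dist y p.
  move=> p bp; have np := bd_notin ho bp.
  split; apply: dist_pos => e; apply: np; by rewrite -e.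
have nax : forall a, ~ D a -> 0 < dist x a /\ 0 < dist y a.
  move=> a np; split; apply: dist_pos => e; apply: np; by rewrite -e.
have key : Rsup (Eset D' fx fy) <= 2 * S + S ^ 2.
  apply: Rsup_le; last nra.
  move=> s [q [bq ->]].
  have preq : forall w', (exists w, g (Some w') = Some w) \/ f None = Some w'.
    move=> w'; case eg: (g (Some w')) => [w|]; first by left; exists w.
    by right; rewrite -eg; case: (b (Some w')).
  have fwd : forall w w', g (Some w') = Some w -> f (Some w) = Some w'.
    by move=> w w' e; rewrite -e; case: (b (Some w')).
  case: Hf => [[h0 [l [hl Hd]]]|[a [bb [l [hl [ha [hb [H1 H2]]]]]]]].
  -
    case: (preq q) => [[p ep]|e]; last by rewrite h0 in e.
    have fp := fwd _ _ ep.
    have bp : boundary D p.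
      apply: (bd_pre H fp _ bq) => e he; exists (l * e); split; first nra.
      split.
        move=> w w' hw ew; rewrite (Hd _ _ _ _ ew fp) in hw.
        apply: (Rmult_lt_reg_l l) => //.
      move=> w' _; case: (preq w') => [[w ew]|e0]; last by rewrite h0 in e0.
      by exists w; apply: fwd.
    have [p1 p2] := npx _ bp.
    apply: (@Rle_trans _ S); last nra.
    suff -> : dist fx fy / sqrt (dist fx q * dist fy q) = dist x y / sqrt (dist x p * dist y p) by apply: Hb.
    rewrite (Hd _ _ _ _ ex ey) (Hd _ _ _ _ ex fp) (Hd _ _ _ _ ey fp).
    apply: ratio_eq.
    + apply: Rmult_le_pos; [lra| exact: dist_ge0].
    + exact: dist_ge0.
    + apply: Rmult_lt_0_compat; apply: Rmult_lt_0_compat; lra.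
    + exact: Rmult_lt_0_compat.
    + ring.
  -
    have na : ~ D a.
      by move=> hD; case: (I1 H hD) => w' [e _]; rewrite ha in e.
    have [a1 a2] := nax _ na.
    have nza : forall z z', f (Some z) = Some z' -> 0 < dist z a.
      move=> z z' e; apply: dist_pos => eza; by rewrite eza ha in e.
    have t0 := dist_ge0 x y.
    case: (excluded_middle_informative (q = bb)) => [->|nqb].
    + apply: (@Rle_trans _ S); last nra.
      suff -> : dist fx fy / sqrt (dist fx bb * dist fy bb) = dist x y / sqrt (dist x a * dist y a) by apply: HB.
      rewrite (H2 _ _ _ _ ex ey) (H1 _ _ ex) (H1 _ _ ey).
      apply: ratio_eq.
      * apply: div_ge0; [nra| apply: Rmult_le_pos; lra].
      * exact: t0.
      * apply: Rmult_lt_0_compat; apply: Rdiv_lt_0_compat; lra.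
      * nra.
      * field; lra.
    + case: (preq q) => [[p ep]|e]; last by case: nqb; rewrite hb in e; case: e.
      have fp := fwd _ _ ep.
      have pa := nza _ _ fp.
      have hqb : 0 < dist q bb by apply: dist_pos.
      have bp : boundary D p.
        apply: (bd_pre H fp _ bq) => e he.
        set d := Rmin (dist q bb / 2) (e * dist q bb / (2 * (dist p a + 1))).
        have hd : 0 < d.
          rewrite /d /Rmin; case: Rle_dec => _; first lra.
          apply: Rdiv_lt_0_compat; nra.
        have hd1 : d <= dist q bb / 2 by rewrite /d; apply: Rmin_l.
        have hd2 : d <= e * dist q bb / (2 * (dist p a + 1)) by rewrite /d; apply: Rmin_r.
        exists d; split => //; split.
          move=> w w' hw ew.
          have tq := dist_tri q w' bb; rewrite (dist_sym q w') in tq.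
          have wb : dist q bb / 2 < dist w' bb by lra.
          have e1 := H2 _ _ _ _ ew fp.
          have e2 := H1 _ _ ew.
          have wa := nza _ _ ew.
          have dwp : dist w p = dist w' q * dist p a / dist w' bb.
            rewrite e1 e2; field; repeat split; lra.
          rewrite dwp.
          have hw0 := dist_ge0 w' q.
          apply: (Rle_lt_trans _ (d * dist p a / (dist q bb / 2))).
            apply: Rmult_le_compat.
            - apply: Rmult_le_pos; lra.
            - apply: Rlt_le; apply: Rinv_0_lt_compat; lra.
            - apply: Rmult_le_compat_r; lra.
            - apply: Rinv_le_contravar; lra.
          apply: (Rle_lt_trans _ (e * dist p a / (dist p a + 1))).
            have -> : d * dist p a / (dist q bb / 2) = (2 * d / dist q bb) * dist p a by field; lra.
            have -> : e * dist p a / (dist p a + 1) = (e / (dist p a + 1)) * dist p a by field; lra.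
            apply: Rmult_le_compat_r; first lra.
            apply: (Rmult_le_reg_r (dist q bb / 2)); first lra.
            have -> : 2 * d / dist q bb * (dist q bb / 2) = d by field; lra.
            have -> : e / (dist p a + 1) * (dist q bb / 2) = e * dist q bb / (2 * (dist p a + 1)) by field; lra.
            done.
          apply: (Rmult_lt_reg_r (dist p a + 1)); first lra.
          have -> : e * dist p a / (dist p a + 1) * (dist p a + 1) = e * dist p a by field; lra.
          nra.
        move=> w' hw; case: (preq w') => [[w ew]|e']; first by exists w; apply: fwd.
        rewrite hb in e'; case: e' => e'; rewrite -e' dist_sym in hw; lra.
      have [p1 p2] := npx _ bp.
      have np := bd_notin ho bp.
      rewrite (H2 _ _ _ _ ex ey) (H2 _ _ _ _ ex fp) (H2 _ _ _ _ ey fp).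
      have core' := @core (dist x y) (dist x a) (dist y a) (dist x p) (dist y p) (dist p a) S
        t0 a1 a2 p1 p2 (dist_ge0 p a) S0.
      have c1 := sq_of_le t0 (Rmult_lt_0_compat _ _ a1 a2) (HB _ na).
      have c2 := sq_of_le t0 (Rmult_lt_0_compat _ _ p1 p2) (Hb _ bp).
      have d1 := dist_tri p x a; rewrite (dist_sym p x) in d1.
      have d2 := dist_tri p y a; rewrite (dist_sym p y) in d2.
      have d3 := dist_tri y x a; rewrite (dist_sym y x) in d3.
      have d4 := dist_tri x y a.
      have d5 := dist_tri x y p.
      have d6 := dist_tri y x p; rewrite (dist_sym y x) in d6.
      have := core' c1 c2 d1 d2 ltac:(lra) ltac:(lra) ltac:(lra) ltac:(lra).
      have pa0 := dist_ge0 p a.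
      set t := dist x y; set A1 := dist x a; set A2 := dist y a;
        set P1 := dist x p; set P2 := dist y p; set PA := dist p a => hc.
      have hN : 0 < A1 * A2 * (P1 * P2) by repeat apply: Rmult_lt_0_compat.
      rewrite (@ratio_eq _ (t * PA) _ (A1 * A2 * (P1 * P2))).
      * apply: le_by_sq.
        - exact: Rmult_le_pos.
        - exact: hN.
        - nra.
        - have -> : (t * PA) ^ 2 = t ^ 2 * PA ^ 2 by ring.
          exact: hc.
      * rewrite /t /A1 /A2; apply: div_ge0; [apply: Rmult_le_pos|]; nra.
      * rewrite /t /PA; apply: Rmult_le_pos; lra.
      * rewrite /P1 /P2 /A1 /A2 /PA; apply: Rmult_lt_0_compat; apply: Rdiv_lt_0_compat; try apply: Rmult_lt_0_compat; lra.
      * exact: hN.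
      * rewrite /P1 /P2 /A1 /A2 /PA; field; repeat split; lra.
have S'0 : 0 <= Rsup (Eset D' fx fy).
  apply: Rsup_ge0 => s' [q [_ ->]]; exact: sv_ge0.
have -> : 2 * ln (1 + S) = ln ((1 + S) * (1 + S)) by rewrite ln_mult; lra.
have hle : 1 + Rsup (Eset D' fx fy) <= (1 + S) * (1 + S) by nra.
case: hle => hle; first by apply: Rlt_le; apply: ln_increasing => //; lra.
by rewrite hle; apply: Rle_refl.
Qed.

End Main.

Theorem theorem5p2 (n : nat) (hn : (2 <= n)%coq_nat)
  (D D' : pt n -> Prop) (f : ext n -> ext n) :
  is_domain D -> is_proper D -> is_domain D' -> is_proper D' ->
  is_mobius f ->
  (forall z : ext n, (exists x, D x /\ f (Some x) = z) <-> (exists y, D' y /\ z = Some y)) ->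
  forall x y fx fy : pt n, D x -> D y ->
    f (Some x) = Some fx -> f (Some y) = Some fy ->
    / 2 * tau_tilde D x y <= tau_tilde D' fx fy /\
    tau_tilde D' fx fy <= 2 * tau_tilde D x y.
Proof.
move=> [_ [hoD _]] hpD [_ [hoD' _]] hpD' hm H x y fx fy hx hy ex ey.
have [g [b Hf]] := mobius_Inv hm.
have Hc : imgc f D D' := H.
split; last exact: (upper hoD hpD b Hf Hc hx hy ex ey).
have bg : bij g f by move=> z; case: (b z) => h1 h2; split.
have Hg := Inv_sym b Hf.
have Hcg : imgc g D' D.
  move=> z; split.
  - move=> [w [hw <-]]; case: (I2 Hc hw) => v [hv ev].
    exists v; split => //; rewrite -ev; by case: (b (Some v)).
  - move=> [v [hv ->]]; case: (I1 Hc hv) => w [ew hw].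
    exists w; split => //; rewrite -ew; by case: (b (Some v)).
have gx : g (Some fx) = Some x by rewrite -ex; case: (b (Some x)).
have gy : g (Some fy) = Some y by rewrite -ey; case: (b (Some y)).
have hx' : D' fx by case: (I1 Hc hx) => w [e hw]; rewrite ex in e; case: e => ->.
have hy' : D' fy by case: (I1 Hc hy) => w [e hw]; rewrite ey in e; case: e => ->.
have := upper hoD' hpD' bg Hg Hcg hx' hy' gx gy.
lra.
Qed.
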